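(* Let $q=(V_q,E_q,L_q)$ and $H=(V_H,E_H,L_H)$ be hypergraphs, fix an injection $pos:E_q\to\{0,1,\dots,|E_q|-1\}$, let $E'\subseteq E_q$, let $M:E'\to E_H$ be a partial embedding of the partial query $q'$ with hyperedge set $E'$, let $e\in E_q\setminus E'$ and $f\in E_H$, and put $M'=M\cup\{(e,f)\}$ (a map $E'\cup\{e\}\to E_H$). Suppose that for every integer $b$ whose binary representation has bit $pos(e)$ equal to $1$ and every label $l\in\Sigma$, $\mathcal{I}_q^{M'}(b,l)=\mathcal{I}_H^{M'}(b,l)$. Then $f$ is $M$-compatible for $e$, i.e., $M'$ is a partial embedding of the partial query with hyperedge set $E'\cup\{e\}$.
   Context: A (vertex-labeled) hypergraph is a triple $H=(V,E,L)$ where $V$ is a finite set, $E$ is a set of non-empty subsets of $V$ (hyperedges, no repeated hyperedges) with $\bigcup_{e\in E}e=V$, and $L:V\to\Sigma$ assigns each vertex a label. For $E'\subseteq E_q$ the partial query is $q'=(\bigcup_{e\in E'}e,E',L_q)$; a map $M:E'\to E_H$ is a partial embedding if there exists an injective label-preserving $\phi:\bigcup_{e\in E'}e\to V_H$ with $\{\phi(u):u\in e\}=M(e)$ for all $e\in E'$. For $F=E'\cup\{e\}$ and $M'$ as in the claim, the incident hyperedge bitmaps are $b_q^{M'}(u)=\sum_{g\in F,\,u\in g}2^{pos(g)}$ for $u\in\bigcup_{g\in F}g$, and $b_H^{M'}(v)=\sum_{g\in F,\,v\in M'(g)}2^{pos(g)}$ for $v\in\bigcup_{g\in F}M'(g)$.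 The cell signatures are $\mathcal{I}_q^{M'}(b,l)=|\{u\in\bigcup_{g\in F}g : b_q^{M'}(u)=b,\ L_q(u)=l\}|$ and $\mathcal{I}_H^{M'}(b,l)=|\{v\in\bigcup_{g\in F}M'(g) : b_H^{M'}(v)=b,\ L_H(v)=l\}|$. A data hyperedge $f$ is $M$-compatible for an unmapped query hyperedge $e$ if $M\cup\{(e,f)\}$ is a partial embedding for the partial query with hyperedge set $E'\cup\{e\}$. *)

(* Defs.v *)
From HB Require Import structures.
From mathcomp Require Import all_boot.
Set Implicit Arguments. Unset Strict Implicit. Unset Printing Implicit Defensive.

(* A vertex-labeled hypergraph over a finite vertex type with labels in Sigma.
   Hyperedges are a set of vertex sets (so no repeated hyperedges). *)
Record hypergraph (Sigma : eqType) := Hypergraph {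
  hV : finType;
  hE : {set {set hV}};
  hL : hV -> Sigma }.
Arguments hV {Sigma} h.
Arguments hE {Sigma} h.
Arguments hL {Sigma} h _.

Definition wf_hypergraph (Sigma : eqType) (H : hypergraph Sigma) : Prop :=
  (forall e, e \in hE H -> e != set0) /\ cover (hE H) = [set: hV H].

Definition partial_embedding (Sigma : eqType) (q H : hypergraph Sigma)
  (E' : {set {set hV q}}) (M : {set hV q} -> {set hV H}) : Prop :=
  (forall g, g \in E' -> M g \in hE H) /\
  exists phi : hV q -> hV H,
    {in cover E' &, injective phi} /\
    (forall u, u \in cover E' -> hL H (phi u) = hL q u) /\
    (forall g, g \in E' -> [set phi u | u in g] = M g).

Arguments partial_embedding {Sigma} q H E' M.

Definition bit (b i : nat) : bool := odd (b %/ 2 ^ i).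

Definition bitmap_q (Sigma : eqType) (q : hypergraph Sigma)
  (pos : {set hV q} -> nat) (F : {set {set hV q}}) (u : hV q) : nat :=
  \sum_(g in F | u \in g) 2 ^ pos g.

Definition bitmap_H (Sigma : eqType) (q H : hypergraph Sigma)
  (pos : {set hV q} -> nat) (F : {set {set hV q}})
  (M' : {set hV q} -> {set hV H}) (v : hV H) : nat :=
  \sum_(g in F | v \in M' g) 2 ^ pos g.

Definition cell_q (Sigma : eqType) (q : hypergraph Sigma)
  (pos : {set hV q} -> nat) (F : {set {set hV q}}) (b : nat) (l : Sigma) : nat :=
  #|[set u in cover F | (bitmap_q pos F u == b) && (hL q u == l)]|.

Definition cell_H (Sigma : eqType) (q H : hypergraph Sigma)
  (pos : {set hV q} -> nat) (F : {set {set hV q}})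
  (M' : {set hV q} -> {set hV H}) (b : nat) (l : Sigma) : nat :=
  #|[set v in \bigcup_(g in F) M' g |
       (bitmap_H pos F M' v == b) && (hL H v == l)]|.

Definition extend_map (Sigma : eqType) (q H : hypergraph Sigma)
  (M : {set hV q} -> {set hV H}) (e : {set hV q}) (f : {set hV H}) :
  {set hV q} -> {set hV H} :=
  fun g => if g == e then f else M g.

(* Main.v *)
Require Import Defs.
From mathcomp Require Import all_boot zify.

Lemma sum_eqk (s : seq nat) k : uniq s ->
  \sum_(i <- s | i == k) 2 ^ i = (k \in s) * 2 ^ k.
Proof.
move=> us.
rewrite (eq_bigr (fun=> 2 ^ k)); last by move=> i /eqP->.
rewrite -(count_uniq_mem k us) -sum1_count big_distrl /=.
by apply: eq_big => // i; rewrite mul1n.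
Qed.

Lemma sum_low (s : seq nat) k : uniq s -> \sum_(i <- s | i < k) 2 ^ i < 2 ^ k.
Proof.
move=> us; elim: k => [|k IH].
  by rewrite big_pred0.
rewrite (bigID (fun i => i < k)) /=.
have E1 : \sum_(i <- s | (i < k.+1) && (i < k)) 2^i = \sum_(i<-s | i<k) 2^i.
  by apply: eq_bigl => i; case: (ltnP i k) => [h|_]; rewrite ?andbT ?andbF // ltnS ltnW.
have E2 : \sum_(i <- s | (i < k.+1) && ~~(i < k)) 2^i = \sum_(i<-s | i == k) 2^i.
  by apply: eq_bigl => i; rewrite ltnS eqn_leq; case: (ltnP i k).
rewrite E1 E2 sum_eqk // expnS mul2n -addnn.
apply: leq_trans (_ : 2 ^ k + (k \in s) * 2 ^ k <= _).
  by rewrite ltn_add2r.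
by rewrite leq_add2l; case: (k \in s); rewrite ?mul1n ?mul0n.
Qed.

Lemma bit_sum (s : seq nat) k : uniq s ->
  odd ((\sum_(i <- s) 2 ^ i) %/ 2 ^ k) = (k \in s).
Proof.
move=> us.
rewrite (bigID (fun i => i < k)) /=.
have E2 : \sum_(i <- s | ~~(i < k)) 2^i =
   \sum_(i<-s | i == k) 2^i + \sum_(i<-s | k < i) 2^i.
  rewrite (bigID (fun i => i == k)) /=; congr (_ + _); apply: eq_bigl => i.
    by case: (eqVneq i k) => [->|]; rewrite ?ltnn ?andbF.
  by rewrite -leqNgt ltn_neqAle eq_sym andbC.
rewrite E2 sum_eqk //.
set H := \sum_(i <- s | k < i) _.
have dH : 2 ^ k.+1 %| H.
  by apply: dvdn_sum => i Hki; apply: dvdn_exp2l.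
rewrite -(divnK dH) expnS mulnA (mulnC _ 2) -mulnA.
rewrite mulnA -mulnDl addnC divnMDl ?expn_gt0 //.
rewrite (divn_small (sum_low s k us)) addn0 oddD oddM /=.
by case: (k \in s).
Qed.
From mathcomp Require Import all_boot.

Definition inc {T V : finType} (F : {set T}) (N : T -> {set V}) (v : V) : {set T} :=
  [set g in F | v \in N g].

Lemma mem_bigcup_inc {T V : finType} (F : {set T}) (N : T -> {set V}) v :
  (v \in \bigcup_(g in F) N g) = (inc F N v != set0).
Proof.
apply/bigcupP/set0Pn => [[g gF vg]|[g]].
  by exists g; rewrite inE gF vg.
by rewrite inE => /andP[gF vg]; exists g.
Qed.

Lemma cntS {Sigma : eqType} {T V : finType} (F : {set T}) (N : T -> {set V})
  (lab : V -> Sigma) (S : {set T}) (l : Sigma) : S != set0 ->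
  #|[set v in \bigcup_(g in F) N g | (inc F N v == S) && (lab v == l)]| =
  #|[set v | (inc F N v == S) && (lab v == l)]|.
Proof.
move=> S0; apply: eq_card => v; rewrite !inE mem_bigcup_inc.
by case: (inc F N v =P S) => [->|_]; rewrite ?S0 ?andbF.
Qed.

Lemma cnt0 {Sigma : eqType} {T V : finType} (F : {set T}) (N : T -> {set V})
  (lab : V -> Sigma) (l : Sigma) :
  #|[set v in \bigcup_(g in F) N g | (inc F N v == set0) && (lab v == l)]| = 0.
Proof.
apply/eqP; rewrite cards_eq0; apply/eqP/setP => v; rewrite !inE mem_bigcup_inc.
by case: eqP.
Qed.

Lemma inc_sub {T V : finType} (F : {set T}) (N : T -> {set V}) v :
  inc F N v \subset F.
Proof. by apply/subsetP => g; rewrite inE => /andP[]. Qed.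

Lemma cnt_out {Sigma : eqType} {T V : finType} (F : {set T}) (N : T -> {set V})
  (lab : V -> Sigma) (S : {set T}) (l : Sigma) : ~~ (S \subset F) ->
  #|[set v in \bigcup_(g in F) N g | (inc F N v == S) && (lab v == l)]| = 0.
Proof.
move=> nS; apply/eqP; rewrite cards_eq0; apply/eqP/setP => v; rewrite !inE.
case: (inc F N v =P S) => [E|]; last by rewrite andbF.
by move: nS; rewrite -E inc_sub.
Qed.

Lemma incU {T V : finType} (E' : {set T}) e (N : T -> {set V}) v :
  inc (E' :|: [set e]) N v = if v \in N e then e |: inc E' N v else inc E' N v.
Proof.
apply/setP => g; case: (boolP (v \in N e)) => H; rewrite !inE;
  case: (eqVneq g e) => [->|ne] /=; rewrite ?orbT ?orbF ?andbT ?andbF ?H ?(negbTE H) //=; by rewrite andbF.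
Qed.

Lemma notin_inc {T V : finType} (E' : {set T}) e (N : T -> {set V}) v :
  e \notin E' -> e \notin inc E' N v.
Proof. by move=> nE; rewrite inE (negbTE nE). Qed.

Lemma setU1_eqb {T : finType} (e : T) (A B : {set T}) : e \notin A -> e \notin B ->
  (e |: A == e |: B) = (A == B).
Proof.
move=> nA nB; apply/eqP/eqP => [h|->//]; apply/setP => x.
have := congr1 (fun X : {set T} => x \in X) h; rewrite !inE.
by case: (eqVneq x e) => [->|]; rewrite ?(negbTE nA) ?(negbTE nB).
Qed.

Lemma split_cnt {Sigma : eqType} {T V : finType} (E' : {set T}) e (N : T -> {set V})
  (lab : V -> Sigma) (S : {set T}) (l : Sigma) : e \notin E' -> e \notin S ->
  #|[set v | (inc E' N v == S) && (lab v == l)]| =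
  #|[set v | (inc (E' :|: [set e]) N v == S) && (lab v == l)]| +
  #|[set v | (inc (E' :|: [set e]) N v == e |: S) && (lab v == l)]|.
Proof.
move=> nE nS; rewrite -(cardsID (N e)) addnC; congr (_ + _); apply: eq_card => v;
  rewrite !inE incU; case: (v \in N e) => //=.
- case: (e |: inc E' N v =P S) => // E.
  by move: nS; rewrite -E setU11.
- by rewrite andbT setU1_eqb // notin_inc.
- rewrite andbF; case: (inc E' N v =P e |: S) => // E.
  by move: (notin_inc E' e N v nE); rewrite E setU11.
Qed.

Lemma bitmap_inc {T V : finType} (pos : T -> nat) (F : {set T}) (N : T -> {set V}) v :
  \sum_(g in F | v \in N g) 2 ^ pos g = \sum_(g in inc F N v) 2 ^ pos g.
Proof. by apply: eq_bigl => g; rewrite inE. Qed.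

Lemma bit_setsum {T : finType} (pos : T -> nat) (D S : {set T}) x :
  {in D &, injective pos} -> S \subset D -> x \in D ->
  bit (\sum_(g in S) 2 ^ pos g) (pos x) = (x \in S).
Proof.
move=> inj sD xD.
rewrite /bit -big_enum /= -(big_map pos predT (fun i => 2 ^ i)).
have sub : {subset enum S <= D} by move=> g; rewrite mem_enum => /(subsetP sD).
rewrite bit_sum; last by rewrite (map_inj_in_uniq (sub_in2 sub inj)) enum_uniq.
apply/mapP/idP => [[g gS /inj]|xS]; last by exists x; rewrite ?mem_enum.
by move=> -> //; [rewrite -mem_enum | apply: sub].
Qed.

Lemma sum_inj {T : finType} (pos : T -> nat) (D S S' : {set T}) :
  {in D &, injective pos} -> S \subset D -> S' \subset D ->
  (\sum_(g in S) 2 ^ pos g == \sum_(g in S') 2 ^ pos g) = (S == S').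
Proof.
move=> inj sD sD'; apply/eqP/eqP => [h|->//]; apply/setP => x.
case: (boolP (x \in D)) => xD.
  by rewrite -(bit_setsum pos D S x inj sD xD) -(bit_setsum pos D S' x inj sD' xD) h.
apply/idP/idP => xS; [move: (subsetP sD x xS) | move: (subsetP sD' x xS)];
  by rewrite (negbTE xD).
Qed.

Theorem theorem4 (Sigma : eqType) (q H : hypergraph Sigma)
  (pos : {set hV q} -> nat)
  (E' : {set {set hV q}}) (M : {set hV q} -> {set hV H})
  (e : {set hV q}) (f : {set hV H}) :
  wf_hypergraph q -> wf_hypergraph H ->
  {in hE q &, injective pos} ->
  (forall g, g \in hE q -> pos g < #|hE q|) ->
  E' \subset hE q ->
  partial_embedding q H E' M ->
  e \in hE q -> e \notin E' ->
  f \in hE H ->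
  (forall (b : nat) (l : Sigma), bit b (pos e) ->
     cell_q pos (E' :|: [set e]) b l =
     cell_H pos (E' :|: [set e]) (extend_map M e f) b l) ->
  partial_embedding q H (E' :|: [set e]) (extend_map M e f).
Proof.
move=> wfq wfH posinj posl sE' [ME' [phi [phiinj [philab phiim]]]] eE enE' fH cond.
set F := E' :|: [set e].
set M' := extend_map M e f.
have M'E : forall g, g \in E' -> M' g = M g.
  move=> g gE; rewrite /M' /extend_map; case: eqP => // ge.
  by move: enE'; rewrite -ge gE.
have M'e : M' e = f by rewrite /M' /extend_map eqxx.
have sF : F \subset hE q by rewrite subUset sE' sub1set eE.
pose Nq := fun g : {set hV q} => g.
pose cq S l := #|[set v in \bigcup_(g in F) Nq g | (inc F Nq v == S) && (hL q v == l)]|.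
pose cH S l := #|[set v in \bigcup_(g in F) M' g | (inc F M' v == S) && (hL H v == l)]|.
have caseE : forall (S : {set {set hV q}}) (l : Sigma), e \in S -> cq S l = cH S l.
  move=> S l eS; case: (boolP (S \subset F)) => sSF; last by rewrite /cq /cH !cnt_out.
  have sSD : S \subset hE q := subset_trans sSF sF.
  have := cond (\sum_(g in S) 2 ^ pos g) l.
  rewrite (bit_setsum pos (hE q) S e posinj sSD eE) => /(_ eS).
  rewrite /cell_q /cell_H /cq /cH /cover => Hc.
  have sI : forall (V : finType) (N : {set hV q} -> {set V}) v,
      inc F N v \subset hE q.
    by move=> V N v; apply: subset_trans (inc_sub F N v) sF.
  rewrite (eq_card (B := [set u in \bigcup_(B in F) B |
      (bitmap_q pos F u == \sum_(g in S) 2 ^ pos g) && (hL q u == l)])); last first.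
    by move=> u; rewrite !inE /bitmap_q (bitmap_inc pos F Nq u) (sum_inj pos (hE q)) ?sI.
  rewrite Hc; apply: eq_card => v.
  by rewrite !inE /bitmap_H (bitmap_inc pos F M' v) (sum_inj pos (hE q)) ?sI.
have coverE : forall u, (u \in cover E') = (inc E' Nq u != set0).
  by move=> u; rewrite /cover (mem_bigcup_inc E' Nq u).
have coverF : forall u, (u \in cover F) = (inc F Nq u != set0).
  by move=> u; rewrite /cover (mem_bigcup_inc F Nq u).
have phiM : forall u g, u \in cover E' -> g \in E' -> (phi u \in M g) = (u \in g).
  move=> u g uc gE; rewrite -phiim //; apply/imsetP/idP => [[w wg Ew]|ug]; last by exists u.
  rewrite (phiinj u w uc _ Ew) //; rewrite /cover; apply/bigcupP; by exists g.
have incphi : forall u, u \in cover E' -> inc E' M' (phi u) = inc E' Nq u.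
  move=> u uc; apply/setP => g; rewrite !inE; case gE: (g \in E') => //=.
  by rewrite M'E // phiM.
have cE : forall (S : {set {set hV q}}) (l : Sigma), S != set0 ->
    #|[set u | (inc E' Nq u == S) && (hL q u == l)]| =
    #|[set v | (inc E' M' v == S) && (hL H v == l)]|.
  move=> S l S0.
  have Ac : forall u, u \in [set u | (inc E' Nq u == S) && (hL q u == l)] -> u \in cover E'.
    by move=> u; rewrite inE coverE => /andP[/eqP-> _].
  rewrite -(card_in_imset (sub_in2 Ac phiinj)); apply: eq_card => v.
  apply/imsetP/idP => [[u uA ->]|].
    by have uc := Ac u uA; move: uA; rewrite !inE incphi // philab.
  rewrite inE => /andP[/eqP vS /eqP vl].
  have [g gS] := set0Pn _ S0.
  move: gS; rewrite -vS inE => /andP[gE]; rewrite M'E // -phiim // => /imsetP[u ug Ev]; subst v.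
  have uc : u \in cover E' by rewrite /cover; apply/bigcupP; exists g.
  by exists u => //; rewrite inE -incphi // vS eqxx -philab // vl eqxx.
have call : forall (S : {set {set hV q}}) (l : Sigma), cq S l = cH S l.
  move=> S l; case: (boolP (e \in S)) => eS; first exact: caseE.
  case: (boolP (S \subset F)) => sSF; last by rewrite /cq /cH !cnt_out.
  case: (eqVneq S set0) => [->|S0]; first by rewrite /cq /cH !cnt0.
  have eS0 : e |: S != set0 by apply/set0Pn; exists e; rewrite setU11.
  have h1 := caseE (e |: S) l (setU11 e S).
  have hq := split_cnt E' e Nq (hL q) S l enE' eS.
  have hH := split_cnt E' e M' (hL H) S l enE' eS.
  have hE := cE S l S0.
  rewrite /cq /cH !cntS // in h1 *.
  rewrite -/F in hq hH; move: hq hH hE => -> -> ; rewrite h1; exact: addIn.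
pose X u := [set w | (inc F Nq w == inc F Nq u) && (hL q w == hL q u)].
pose Y u := [set v | (inc F M' v == inc F Nq u) && (hL H v == hL q u)].
have XY : forall u, u \in cover F -> #|X u| = #|Y u|.
  move=> u uc; have := call (inc F Nq u) (hL q u).
  by rewrite /cq /cH !cntS // -coverF.
pose psi u := nth (phi u) (enum (Y u)) (index u (enum (X u))).
have idxlt : forall u x, u \in cover F -> x \in X u ->
    index x (enum (X u)) < size (enum (Y u)).
  by move=> u x uc xX; rewrite -cardE -XY // cardE index_mem mem_enum.
have uX : forall u, u \in X u by move=> u; rewrite inE !eqxx.
have psiY : forall u, u \in cover F -> psi u \in Y u.
  by move=> u uc; rewrite -mem_enum /psi; apply: mem_nth; apply: idxlt.
have psiI : forall u, u \in cover F ->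
    inc F M' (psi u) = inc F Nq u /\ hL H (psi u) = hL q u.
  by move=> u /psiY; rewrite inE => /andP[/eqP -> /eqP ->].
have XYw : forall u w, inc F Nq u = inc F Nq w -> hL q u = hL q w ->
    X u = X w /\ Y u = Y w.
  by move=> u w Ei El; rewrite /X /Y Ei El.
have psiinj : {in cover F &, injective psi}.
  move=> u w uc wc E.
  have [iu lu] := psiI u uc; have [iw lw] := psiI w wc.
  have [EX EY] : X u = X w /\ Y u = Y w.
    by apply: XYw; [rewrite -iu E iw | rewrite -lu E lw].
  have uXw : u \in X w by rewrite -EX.
  move: E; rewrite /psi EX EY (set_nth_default (phi u) _ (idxlt w w wc (uX w))).
  move/eqP; rewrite nth_uniq ?enum_uniq ?idxlt // => /eqP.
  by apply: (index_inj u); rewrite mem_enum.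
have Xc : forall u w, u \in cover F -> w \in X u -> w \in cover F.
  by move=> u w uc; rewrite inE coverF => /andP[/eqP -> _]; rewrite -coverF.
have img : forall g, g \in F -> psi @: g = M' g.
  move=> g gF; apply/setP => v; apply/imsetP/idP => [[u ug ->]|vM].
    have uc : u \in cover F by rewrite /cover; apply/bigcupP; exists g.
    have [iu _] := psiI u uc.
    have : g \in inc F M' (psi u) by rewrite iu inE gF ug.
    by rewrite inE => /andP[].
  have vn : inc F M' v != set0 by apply/set0Pn; exists g; rewrite inE gF vM.
  have := call (inc F M' v) (hL H v); rewrite /cq /cH !cntS // => ceq.
  have : 0 < #|[set u | (inc F Nq u == inc F M' v) && (hL q u == hL H v)]|.
    by rewrite ceq; apply/card_gt0P; exists v; rewrite inE !eqxx.
  move=> /card_gt0P [u0]; rewrite inE => /andP[/eqP iu0 /eqP lu0].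
  have u0c : u0 \in cover F by rewrite coverF iu0.
  have XYeq : psi @: X u0 = Y u0.
    apply/eqP; rewrite eqEcard card_in_imset ?XY ?leqnn ?andbT //; last first.
      by apply: sub_in2 psiinj => w; apply: Xc.
    apply/subsetP => _ /imsetP[w wX ->].
    have wc := Xc _ _ u0c wX.
    move: wX; rewrite inE => /andP[/eqP Ei /eqP El].
    by have [_ <-] := XYw w u0 Ei El; apply: psiY.
  have : v \in Y u0 by rewrite inE iu0 lu0 !eqxx.
  rewrite -XYeq => /imsetP[u uX0 ->]; exists u => //.
  move: uX0; rewrite inE => /andP[/eqP Ei _].
  have : g \in inc F Nq u by rewrite Ei iu0 inE gF vM.
  by rewrite inE => /andP[].
split.
  move=> g; rewrite !inE => /orP[gE|/eqP->]; first by rewrite M'E // ME'.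
  by rewrite M'e.
exists psi; split; first exact: psiinj.
split; last exact: img.
by move=> u uc; have [_ ->] := psiI u uc.
Qed.
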